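(* Let $X$ be a hyperbolic approximation of $Z$. Any two vertices $v,v'\in V$ can be joined by a geodesic $v=v_0,v_1,\dots,v_{n+1}=v'$ (where $n+1=|vv'|$) such that $\ell(v_i)<\max\{\ell(v_{i-1}),\ell(v_{i+1})\}$ for all $1\le i\le n$.
   Context: Hyperbolic approximation: let $(Z,d)$ be a bounded metric space with at least two points and fix $0<r\le1/6$. Let $k_0$ be the largest integer with $\operatorname{diam}Z<r^{k_0}$. For each integer $k\ge k_0$ choose a maximal $r^k$-separated subset $V_k\subset Z$. Vertex set $V=\bigsqcup_{k\ge k_0}V_k$ (disjoint union), level $\ell(v)=k$ for $v\in V_k$, ball $B(v)=\{z:d(z,v)<2r^k\}$ with closure $\overline B(v)$. Edges: $v,v'$ of equal level with $\overline B(v)\cap\overline B(v')\neq\emptyset$ (horizontal), or levels differing by one with the ball of the higher-level vertex contained in the ball of the lower-level one (radial). Path metric with unit edges, denoted $|vv'|$. A geodesic between vertices is a vertex sequence $v_0,\dots,v_N$ with consecutive vertices adjacent and $N=|v_0v_N|$. *)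

(* Defs.v *)
From Stdlib Require Import Reals ZArith List.
From Coquelicot Require Import Coquelicot.
Open Scope R_scope.

Section HypApprox.
Variable T : Type.
Variable d : T -> T -> R.

Definition is_metric : Prop :=
  (forall x y, 0 <= d x y) /\
  (forall x y, d x y = 0 <-> x = y) /\
  (forall x y, d x y = d y x) /\
  (forall x y z, d x z <= d x y + d y z).

Definition metric_bounded : Prop := exists M, forall x y, d x y <= M.

Definition hdiam : Rbar := Lub_Rbar (fun t => exists x y, t = d x y).

Definition is_k0 (r : R) (k0 : Z) : Prop :=
  Rbar_lt hdiam (Finite (powerRZ r k0)) /\
  (forall k : Z, Rbar_lt hdiam (Finite (powerRZ r k)) -> (k <= k0)%Z).

Definition separated (a : R) (A : T -> Prop) : Prop :=
  forall x y, A x -> A y -> x <> y -> a <= d x y.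

Definition maximal_separated (a : R) (A : T -> Prop) : Prop :=
  separated a A /\
  (forall B : T -> Prop, separated a B -> (forall x, A x -> B x) ->
     forall x, B x -> A x).

(** Vertices: tagged pairs (level k, point z) with k >= k0 and z in V_k.
    This realises the disjoint union of the V_k. *)
Definition vertex := (Z * T)%type.
Definition level (v : vertex) : Z := fst v.

Definition is_vertex (k0 : Z) (V : Z -> T -> Prop) (v : vertex) : Prop :=
  (k0 <= fst v)%Z /\ V (fst v) (snd v).

Definition ball (r : R) (v : vertex) (z : T) : Prop :=
  d z (snd v) < 2 * powerRZ r (fst v).

Definition mclosure (A : T -> Prop) (z : T) : Prop :=
  forall eps, 0 < eps -> exists a, A a /\ d z a < eps.

Definition edge (r : R) (k0 : Z) (V : Z -> T -> Prop) (v w : vertex) : Prop :=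
  is_vertex k0 V v /\ is_vertex k0 V w /\
  (
    (level v = level w /\ v <> w /\
       exists z, mclosure (ball r v) z /\ mclosure (ball r w) z)
    \/
    (level w = (level v + 1)%Z /\ forall z, ball r w z -> ball r v z)
    \/
    (level v = (level w + 1)%Z /\ forall z, ball r v z -> ball r w z) ).

Definition walk (r : R) (k0 : Z) (V : Z -> T -> Prop)
  (n : nat) (p : nat -> vertex) (u w : vertex) : Prop :=
  p 0%nat = u /\ p n = w /\ is_vertex k0 V u /\
  (forall i, (i < n)%nat -> edge r k0 V (p i) (p (S i))).

Definition gdist (r : R) (k0 : Z) (V : Z -> T -> Prop)
  (u w : vertex) (n : nat) : Prop :=
  (exists p, walk r k0 V n p u w) /\
  (forall m p, walk r k0 V m p u w -> (n <= m)%nat).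

End HypApprox.

(* Main.v *)
Require Import Defs.
From Stdlib Require Import Reals ZArith List Lia Lra Classical.
From Coquelicot Require Import Coquelicot.
Open Scope R_scope.

Lemma edge_sym T d r k0 V v w : edge T d r k0 V v w -> edge T d r k0 V w v.
Proof.
  unfold edge; intros (Hv&Hw&H); split;[auto|split;[auto|]].
  destruct H as [(Hl&Hne&z&H1&H2)|[H|H]].
  - left; split;[auto|split;[intro E; apply Hne; auto|exists z; auto]].
  - right; right; auto.
  - right; left; auto.
Qed.

Lemma walk_concat T d r k0 V n1 p1 n2 p2 a b c :
  walk T d r k0 V n1 p1 a b -> walk T d r k0 V n2 p2 b c ->
  walk T d r k0 V (n1+n2) (fun j => if (j <=? n1)%nat then p1 j else p2 (j - n1)%nat) a c.
Proof.
  intros (H0&HN&Hv&He) (G0&GN&Gv&Ge). split;[|split;[|split]].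
  - simpl. exact H0.
  - destruct (Nat.leb_spec (n1+n2) n1).
    + assert (n2 = 0%nat) by lia; subst n2. rewrite Nat.add_0_r, HN, <- G0; auto.
    + replace (n1 + n2 - n1)%nat with n2 by lia; auto.
  - auto.
  - intros j Hj. destruct (Nat.leb_spec j n1), (Nat.leb_spec (S j) n1).
    + apply He; lia.
    + assert (j = n1) by lia; subst j. rewrite HN, <- G0.
      replace (S n1 - n1)%nat with 1%nat by lia. apply Ge; lia.
    + lia.
    + replace (S j - n1)%nat with (S (j - n1)) by lia. apply Ge; lia.
Qed.

Lemma walk_edge T d r k0 V a b : edge T d r k0 V a b ->
  walk T d r k0 V 1 (fun j => if (j =? 0)%nat then a else b) a b.
Proof.
  intros He. split;[reflexivity|split;[reflexivity|split]].
  - destruct He; auto.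
  - intros i Hi. assert (i = 0%nat) by lia; subst i. simpl. auto.
Qed.

Lemma walk_triv T d r k0 V x : is_vertex T k0 V x -> walk T d r k0 V 0 (fun _ => x) x x.
Proof. intros H. split;[auto|split;[auto|split;[auto|intros; lia]]]. Qed.

Lemma walk_eq T d r k0 V N p u w a m :
  walk T d r k0 V N p u w -> (a + m <= N)%nat -> p a = p (a+m)%nat ->
  walk T d r k0 V (N - m) (fun j => if (j <=? a)%nat then p j else p (j+m)%nat) u w.
Proof.
  intros (H0&HN&Hv&He) Ham Heq. split;[|split;[|split]].
  - simpl; auto.
  - destruct (Nat.leb_spec (N-m) a).
    + replace (N-m)%nat with a by lia. rewrite Heq. replace (a+m)%nat with N by lia; auto.
    + replace (N-m+m)%nat with N by lia; auto.
  - auto.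
  - intros j Hj. destruct (Nat.leb_spec j a), (Nat.leb_spec (S j) a).
    + apply He; lia.
    + assert (j = a) by lia; subst j. rewrite Heq. apply He. lia.
    + lia.
    + apply He. lia.
Qed.

Lemma walk_skip T d r k0 V N p u w a :
  walk T d r k0 V N p u w -> (a + 2 <= N)%nat -> edge T d r k0 V (p a) (p (a+2)%nat) ->
  walk T d r k0 V (N - 1) (fun j => if (j <=? a)%nat then p j else p (S j)) u w.
Proof.
  intros (H0&HN&Hv&He) Ham Heq. split;[|split;[|split]].
  - simpl; auto.
  - destruct (Nat.leb_spec (N-1) a). lia.
    replace (S (N-1))%nat with N by lia; auto.
  - auto.
  - intros j Hj. destruct (Nat.leb_spec j a), (Nat.leb_spec (S j) a).
    + apply He; lia.
    + assert (j = a) by lia; subst j. replace (S (S a)) with (a+2)%nat by lia. auto.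
    + lia.
    + apply He. lia.
Qed.

Lemma walk_repl T d r k0 V N p u w i W :
  walk T d r k0 V N p u w -> (1 <= i)%nat -> (i + 1 <= N)%nat ->
  edge T d r k0 V (p (i-1)%nat) W -> edge T d r k0 V W (p (i+1)%nat) ->
  walk T d r k0 V N (fun j => if (j =? i)%nat then W else p j) u w.
Proof.
  intros (H0&HN&Hv&He) Hi1 Hi2 E1 E2. split;[|split;[|split]].
  - destruct (Nat.eqb_spec 0 i); [lia|auto].
  - destruct (Nat.eqb_spec N i); [lia|auto].
  - auto.
  - intros j Hj. destruct (Nat.eqb_spec j i), (Nat.eqb_spec (S j) i).
    + lia.
    + subst j. replace (S i) with (i+1)%nat by lia. auto.
    + rewrite <- e in E1. replace (S j - 1)%nat with j in E1 by lia. exact E1.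
    + apply He; lia.
Qed.

Fixpoint sumn (h : nat -> nat) (n : nat) : nat :=
  match n with 0 => h 0%nat | S m => (sumn h m + h (S m))%nat end.

Lemma sumn_ext h1 h2 n : (forall j, (j <= n)%nat -> h1 j = h2 j) -> sumn h1 n = sumn h2 n.
Proof.
  induction n; simpl; intros H. apply H; lia.
  rewrite IHn by (intros; apply H; lia). rewrite H by lia. reflexivity.
Qed.

Lemma sumn_lt h1 h2 n i : (i <= n)%nat -> (forall j, j <> i -> h1 j = h2 j) ->
  (h2 i < h1 i)%nat -> (sumn h2 n < sumn h1 n)%nat.
Proof.
  induction n; simpl; intros Hi H Hl.
  - assert (i = 0%nat) by lia; subst i; auto.
  - destruct (Nat.eq_dec i (S n)).
    + subst i. rewrite (sumn_ext h1 h2 n) by (intros; apply H; lia). lia.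
    + rewrite (H (S n)) by auto. specialize (IHn ltac:(lia) H Hl). lia.
Qed.

Lemma nat_min (P : nat -> Prop) : (exists n, P n) -> exists n, P n /\ forall m, P m -> (n <= m)%nat.
Proof.
  intros [n Hn]. revert Hn. induction n as [n IH] using lt_wf_ind. intros Hn.
  destruct (classic (exists m, (m < n)%nat /\ P m)) as [[m [Hm Pm]]|H].
  - apply (IH m Hm Pm).
  - exists n; split; auto. intros m Pm. destruct (Nat.lt_ge_cases m n); auto.
    exfalso; apply H; eauto.
Qed.

Lemma powS r k : r <> 0 -> powerRZ r k = r * powerRZ r (k-1).
Proof. intros. replace k with ((k-1)+1)%Z at 1 by lia. rewrite powerRZ_add by auto. simpl. ring. Qed.

Lemma near_pt T d (Hm : is_metric T d) a (A : T -> Prop) : 0 < a -> maximal_separated T d a A ->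
  forall z, exists w, A w /\ d z w < a.
Proof.
  intros Ha [Hs Hmax] z. apply NNPP; intro H.
  assert (Hz : A z).
  { apply (Hmax (fun x => A x \/ x = z)); [| intros; left; auto | right; auto].
    intros x y [Hx|Hx] [Hy|Hy] Hne.
    - apply Hs; auto.
    - subst y. apply Rnot_lt_le; intro; apply H; exists x; split; auto.
      destruct Hm as (_&_&Hsym&_). rewrite Hsym; auto.
    - subst x. apply Rnot_lt_le; intro; apply H; exists y; split; auto.
    - subst; congruence. }
  apply H; exists z; split; auto. destruct Hm as (_&Hz0&_). rewrite (proj2 (Hz0 z z) eq_refl). auto.
Qed.

Lemma root_unique T d r k0 V (Hk0 : is_k0 T d r k0) (Hr0 : 0 < r)
  (HV : forall k : Z, (k0 <= k)%Z -> maximal_separated T d (powerRZ r k) (V k)) a b :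
  V k0 a -> V k0 b -> a = b.
Proof.
  intros Ha Hb. apply NNPP; intro Hne.
  destruct (HV k0 (Z.le_refl _)) as [Hs _]. specialize (Hs a b Ha Hb Hne).
  destruct Hk0 as [Hlt _]. unfold hdiam in Hlt.
  destruct (Lub_Rbar_correct (fun t => exists x y, t = d x y)) as [Hub _].
  specialize (Hub (d a b) (ex_intro _ a (ex_intro _ b eq_refl))).
  destruct (Lub_Rbar (fun t => exists x y, t = d x y)); simpl in *; try contradiction; lra.
Qed.

Lemma vert_eq T (u x : vertex T) : fst u = fst x -> snd u = snd x -> u = x.
Proof. destruct u, x; simpl; intros; subst; auto. Qed.

Lemma clos_bound T d (Hm : is_metric T d) r v z :
  mclosure T d (Defs.ball T d r v) z -> d z (snd v) <= 2 * powerRZ r (fst v).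
Proof.
  intros H. apply Rnot_lt_le; intro Hl.
  destruct (H (d z (snd v) - 2 * powerRZ r (fst v))) as [a [Ha Hd]]. lra.
  unfold Defs.ball in Ha. destruct Hm as (_&_&_&Htr). specialize (Htr z a (snd v)). lra.
Qed.

Lemma ball_clos T d (Hm : is_metric T d) r v z : Defs.ball T d r v z -> mclosure T d (Defs.ball T d r v) z.
Proof.
  intros H eps He. exists z; split; auto. destruct Hm as (_&Hz0&_).
  rewrite (proj2 (Hz0 z z) eq_refl). auto.
Qed.

Lemma self_ball T d (Hm : is_metric T d) r (Hr0 : 0 < r) v : Defs.ball T d r v (snd v).
Proof.
  unfold Defs.ball. destruct Hm as (_&Hz0&_). rewrite (proj2 (Hz0 _ _) eq_refl).
  pose proof (powerRZ_lt r (fst v) Hr0). lra.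
Qed.

Lemma parent T d (Hm : is_metric T d) r (Hr0 : 0 < r) (Hr1 : r <= 1/6) k0 V
  (HV : forall k : Z, (k0 <= k)%Z -> maximal_separated T d (powerRZ r k) (V k)) x :
  is_vertex T k0 V x -> (k0 < fst x)%Z ->
  exists W, is_vertex T k0 V W /\ fst W = (fst x - 1)%Z /\
    d (snd x) (snd W) < powerRZ r (fst x - 1) /\
    (forall z, Defs.ball T d r x z -> Defs.ball T d r W z).
Proof.
  intros Hx Hlt.
  destruct (near_pt T d Hm (powerRZ r (fst x - 1)) (V (fst x - 1)%Z) (powerRZ_lt _ _ Hr0)
    (HV (fst x - 1)%Z ltac:(lia)) (snd x)) as [w [Hw Hd]].
  exists ((fst x - 1)%Z, w). simpl. split;[split; simpl; auto; lia|split;[auto|split;[auto|]]].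
  intros z Hz. unfold Defs.ball in *; simpl in *. rewrite powS in Hz by lra.
  set (a := powerRZ r (fst x - 1)) in *. assert (0 < a) by apply powerRZ_lt, Hr0.
  destruct Hm as (_&_&_&Htr). specialize (Htr z (snd x) w).
  assert (r * a <= a / 6) by nra. lra.
Qed.

Lemma nbr T d (Hm : is_metric T d) r (Hr0 : 0 < r) (Hr1 : r <= 1/6) k0 V x u W :
  edge T d r k0 V u x -> (fst u <= fst x)%Z -> is_vertex T k0 V W ->
  fst W = (fst x - 1)%Z -> d (snd x) (snd W) < powerRZ r (fst x - 1) ->
  (forall z, Defs.ball T d r x z -> Defs.ball T d r W z) ->
  u = W \/ edge T d r k0 V W u.
Proof.
  intros (Hu&Hx&H) Hle HW HWl Hd Hb.
  destruct H as [(Hl&Hne&z&H1&H2)|[(Hl&H)|(Hl&H)]]; unfold level in *.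
  - right. split;[auto|split;[auto|]]. right; left. split;[unfold level; lia|].
    intros t Ht. unfold Defs.ball in *. rewrite HWl.
    apply clos_bound in H1; auto. apply clos_bound in H2; auto.
    rewrite Hl in Ht, H1. rewrite powS in Ht, H1, H2 by lra.
    set (a := powerRZ r (fst x - 1)) in *. assert (0 < a) by apply powerRZ_lt, Hr0.
    pose proof Hm as (_&_&Hsym&Htr).
    pose proof (Htr t (snd u) (snd W)). pose proof (Htr (snd u) (snd x) (snd W)).
    pose proof (Htr (snd u) z (snd x)). rewrite (Hsym (snd u) z) in *.
    assert (r * a <= a / 6) by nra. lra.
  - destruct (classic (u = W)) as [E|E]; [left; auto|right].
    split;[auto|split;[auto|]]. left. split;[unfold level; lia|split;[intro; apply E; auto|]].
    exists (snd x). split; apply ball_clos; auto.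
    apply Hb, self_ball; auto. apply H, self_ball; auto.
  - lia.
Qed.

Lemma above_root T d r k0 V (Hk0 : is_k0 T d r k0) (Hr0 : 0 < r)
  (HV : forall k : Z, (k0 <= k)%Z -> maximal_separated T d (powerRZ r k) (V k)) u x :
  edge T d r k0 V u x -> (fst u <= fst x)%Z -> (k0 < fst x)%Z.
Proof.
  intros (Hu&Hx&H) Hle. destruct Hu as [Hu1 Hu2]. destruct Hx as [Hx1 Hx2].
  destruct H as [(Hl&Hne&_)|[(Hl&H)|(Hl&H)]]; unfold level in *; try lia.
  destruct (Z.eq_dec (fst x) k0); [|lia]. exfalso. apply Hne. apply vert_eq; auto.
  rewrite Hl, e in Hu2. rewrite e in Hx2. eapply root_unique; eauto.
Qed.

Lemma connect T d (Hm : is_metric T d) r (Hr0 : 0 < r) (Hr1 : r <= 1/6) k0 V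
  (Hk0 : is_k0 T d r k0)
  (HV : forall k : Z, (k0 <= k)%Z -> maximal_separated T d (powerRZ r k) (V k)) :
  forall n x rho, is_vertex T k0 V x -> is_vertex T k0 V rho -> fst rho = k0 ->
  Z.to_nat (fst x - k0) = n ->
  (exists m p, walk T d r k0 V m p x rho) /\ (exists m p, walk T d r k0 V m p rho x).
Proof.
  induction n; intros x rho Hx Hrho Hl Hn.
  - assert (x = rho).
    { destruct Hx as [Hx1 Hx2], Hrho as [Hr1' Hr2].
      assert (fst x = k0) by lia. apply vert_eq; [lia|].
      rewrite H in Hx2. rewrite Hl in Hr2. eapply root_unique; eauto. }
    subst x. split; exists 0%nat, (fun _ => rho); apply walk_triv; auto.
  - destruct (parent T d Hm r Hr0 Hr1 k0 V HV x Hx ltac:(lia)) as (W&HW&HWl&Hd&Hb).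
    assert (Exw : edge T d r k0 V x W).
    { split;[auto|split;[auto|]]. right; right. unfold level; split;[lia|auto]. }
    destruct (IHn W rho HW Hrho Hl ltac:(lia)) as [[m1 [p1 H1]] [m2 [p2 H2]]].
    split.
    + eexists; eexists. eapply walk_concat;[apply walk_edge, Exw|exact H1].
    + eexists; eexists. eapply walk_concat;[exact H2|apply walk_edge, edge_sym, Exw].
Qed.

Definition good T (N : nat) (p : nat -> vertex T) : Prop :=
  forall i : nat, (1 <= i)%nat -> (i + 1 <= N)%nat ->
    (level T (p i) < Z.max (level T (p (i - 1)%nat)) (level T (p (i + 1)%nat)))%Z.

Lemma main_ind T d (Hm : is_metric T d) r (Hr0 : 0 < r) (Hr1 : r <= 1/6) k0 V
  (Hk0 : is_k0 T d r k0)
  (HV : forall k : Z, (k0 <= k)%Z -> maximal_separated T d (powerRZ r k) (V k)) v v' N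
  (Hmin : forall m p, walk T d r k0 V m p v v' -> (N <= m)%nat) :
  forall n p, sumn (fun j => Z.to_nat (fst (p j) - k0)) N = n -> walk T d r k0 V N p v v' ->
  exists q, walk T d r k0 V N q v v' /\ good T N q.
Proof.
  intro n. induction n as [n IH] using lt_wf_ind. intros p Hs Hw.
  destruct (classic (exists i, (1 <= i)%nat /\ (i + 1 <= N)%nat /\
     ~ (level T (p i) < Z.max (level T (p (i - 1)%nat)) (level T (p (i + 1)%nat)))%Z))
    as [[i (Hi1&Hi2&Hbad)]|Hno].
  2:{ exists p; split; auto. intros i H1 H2. apply NNPP; intro; apply Hno; eauto. }
  unfold level in Hbad.
  pose proof Hw as (_&_&_&He).
  assert (E1 : edge T d r k0 V (p (i-1)%nat) (p i)).
  { replace i with (S (i-1)) at 2 by lia. apply He; lia. }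
  assert (E2 : edge T d r k0 V (p (i+1)%nat) (p i)).
  { apply edge_sym. replace (i+1)%nat with (S i) by lia. apply He; lia. }
  assert (L1 : (fst (p (i-1)%nat) <= fst (p i))%Z) by lia.
  assert (L2 : (fst (p (i+1)%nat) <= fst (p i))%Z) by lia.
  pose proof (above_root T d r k0 V Hk0 Hr0 HV _ _ E1 L1) as Hab.
  assert (Hxv : is_vertex T k0 V (p i)) by (destruct E1 as (_&?&_); auto).
  destruct (parent T d Hm r Hr0 Hr1 k0 V HV (p i) Hxv Hab) as (W&HW&HWl&Hd&Hb).
  destruct (nbr T d Hm r Hr0 Hr1 k0 V (p i) _ W E1 L1 HW HWl Hd Hb) as [A1|A1];
  destruct (nbr T d Hm r Hr0 Hr1 k0 V (p i) _ W E2 L2 HW HWl Hd Hb) as [A2|A2].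
  - exfalso. assert (Heq : p (i-1)%nat = p (i-1+2)%nat).
    { replace (i-1+2)%nat with (i+1)%nat by lia. congruence. }
    pose proof (Hmin _ _ (walk_eq T d r k0 V N p v v' (i-1) 2 Hw ltac:(lia) Heq)). lia.
  - exfalso. assert (Hed : edge T d r k0 V (p (i-1)%nat) (p (i-1+2)%nat)).
    { replace (i-1+2)%nat with (i+1)%nat by lia. rewrite A1. auto. }
    pose proof (Hmin _ _ (walk_skip T d r k0 V N p v v' (i-1) Hw ltac:(lia) Hed)). lia.
  - exfalso. assert (Hed : edge T d r k0 V (p (i-1)%nat) (p (i-1+2)%nat)).
    { replace (i-1+2)%nat with (i+1)%nat by lia. rewrite A2. apply edge_sym; auto. }
    pose proof (Hmin _ _ (walk_skip T d r k0 V N p v v' (i-1) Hw ltac:(lia) Hed)). lia.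
  - pose proof (walk_repl T d r k0 V N p v v' i W Hw Hi1 Hi2 (edge_sym _ _ _ _ _ _ _ A1) A2) as Hw'.
    refine (IH _ _ _ eq_refl Hw'). rewrite <- Hs.
    apply (sumn_lt _ _ N i); [lia| |].
    + intros j Hj. destruct (Nat.eqb_spec j i); [lia|auto].
    + rewrite Nat.eqb_refl. rewrite HWl. destruct HW. lia.
Qed.

Theorem mainTheorem7
  (T : Type) (d : T -> T -> R)
  (Hmetric : is_metric T d)
  (Hbounded : metric_bounded T d)
  (Htwo : exists x y : T, x <> y)
  (r : R) (Hr0 : 0 < r) (Hr1 : r <= 1 / 6)
  (k0 : Z) (Hk0 : is_k0 T d r k0)
  (V : Z -> T -> Prop)
  (HV : forall k : Z, (k0 <= k)%Z -> maximal_separated T d (powerRZ r k) (V k)) :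
  forall v v' : vertex T,
    is_vertex T k0 V v -> is_vertex T k0 V v' ->
    exists (N : nat) (p : nat -> vertex T),
      walk T d r k0 V N p v v' /\
      gdist T d r k0 V v v' N /\
      (forall i : nat, (1 <= i)%nat -> (i + 1 <= N)%nat ->
         (level T (p i) < Z.max (level T (p (i - 1)%nat)) (level T (p (i + 1)%nat)))%Z).
Proof.
  intros v v' Hv Hv'.
  destruct Htwo as [t _].
  destruct (near_pt T d Hmetric _ (V k0) (powerRZ_lt _ k0 Hr0) (HV k0 (Z.le_refl _)) t) as [w [Hw _]].
  assert (Hrho : is_vertex T k0 V (k0, w)) by (split; simpl; auto; lia).
  destruct (connect T d Hmetric r Hr0 Hr1 k0 V Hk0 HV _ v (k0, w) Hv Hrho eq_refl eq_refl)
    as [[m1 [p1 H1]] _].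
  destruct (connect T d Hmetric r Hr0 Hr1 k0 V Hk0 HV _ v' (k0, w) Hv' Hrho eq_refl eq_refl)
    as [_ [m2 [p2 H2]]].
  destruct (nat_min (fun n => exists p, walk T d r k0 V n p v v')) as [N [[p Hp] Hmin]].
  { eexists; eexists. eapply walk_concat; eauto. }
  assert (Hmin' : forall m p, walk T d r k0 V m p v v' -> (N <= m)%nat).
  { intros m q Hq. apply Hmin. eauto. }
  destruct (main_ind T d Hmetric r Hr0 Hr1 k0 V Hk0 HV v v' N Hmin' _ p eq_refl Hp) as [q [Hq Hg]].
  exists N, q. split;[auto|split;[split;[eauto|auto]|exact Hg]].
Qed.
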